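(* For any constant $C$ and any $a>-1$, the integral operator on $L^2[0,1]$ with kernel $$k_C(x,y)=C\exp\Big[C(\log(1/x))^{3/4}+C(\log(1/y))^{3/4}\Big]\frac{y^{a/2}}{x^{(a+1)/2}}\mathbf 1_{y<x}$$ is Hilbert–Schmidt. *)

(* Defs.v *)
From HB Require Import structures.
From mathcomp Require Import all_boot all_order all_algebra.
From mathcomp Require Import all_classical all_reals all_analysis.
Set Implicit Arguments. Unset Strict Implicit. Unset Printing Implicit Defensive.
Import Order.TTheory GRing.Theory Num.Theory.
Import numFieldNormedType.Exports.
Local Open Scope classical_set_scope.
Local Open Scope ring_scope.

Definition kC (R : realType) (C a : R) (x y : R) : R :=
  C * expR (C * (ln (x^-1)) `^ (3/4) + C * (ln (y^-1)) `^ (3/4))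
    * (y `^ (a / 2)) / (x `^ ((a + 1) / 2))
    * (if y < x then 1 else 0).

(* The integral operator on L^2[0,1] with kernel K is Hilbert-Schmidt,
   i.e. K belongs to L^2([0,1]^2) (w.r.t. the product Lebesgue measure):
   K is measurable on [0,1]^2 and |K|^2 has finite integral there. *)
Definition hilbert_schmidt_kernel (R : realType) (K : R -> R -> R) : Prop :=
  ((@lebesgue_measure R) \x (@lebesgue_measure R))%E.-integrable
    (`[0, 1] `*` `[0, 1]) (fun z : R * R => ((K z.1 z.2) ^+ 2)%:E).

(* Main.v *)
Require Import Defs.
From HB Require Import structures.
From mathcomp Require Import all_boot all_order all_algebra.
From mathcomp Require Import all_classical all_reals all_analysis.
From mathcomp Require Import measurable_realfun lebesgue_integral_fubini.
From mathcomp Require Import ring lra.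
Import Order.TTheory GRing.Theory Num.Theory.
Import numFieldNormedType.Exports.
Local Open Scope classical_set_scope.
Local Open Scope ring_scope.

Section S.
Variable R : realType.

Lemma FTC_pow (p a : R) : -1 < p -> 0 < a -> a < 1 ->
  (\int[lebesgue_measure]_(x in `[a, 1%R]) (x `^ p)%:E =
   ((p+1)^-1)%:E - ((p+1)^-1 * a `^ (p+1))%:E)%E.
Proof.
move=> p1 a0 a1.
have p10 : 0 < p + 1 by rewrite -ltrBlDr sub0r.
pose F := fun x : R => (p+1)^-1 * x `^ (p+1).
have dF (x : R) : 0 < x -> is_derive x 1 F ((p+1)^-1 * ((p+1) * x `^ (p+1-1))).
  move=> x0; rewrite /F.
  have := is_derive1_powR (p+1) x0.
  move=> h; apply: is_deriveZ.
have -> : ((p+1)^-1)%:E = (F 1)%:E by rewrite /F powR1 mulr1.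
apply: continuous_FTC2 => //.
- apply: derivable_within_continuous => x; rewrite in_itv/= => /andP[ax _].
  by apply: derivable_powR; rewrite in_itv/= (lt_le_trans a0 ax).
- split.
  + move=> x; rewrite in_itv/= => /andP[ax _].
    by have [] := dF x (lt_trans a0 ax).
  + apply: cvg_at_right_filter.
    apply: differentiable_continuous; apply/derivable1_diffP.
    by have [] := dF a a0.
  + apply: cvg_at_left_filter.
    apply: differentiable_continuous; apply/derivable1_diffP.
    by have [] := dF 1 ltr01.
- move=> x; rewrite in_itv/= => /andP[ax _].
  have x0 := lt_trans a0 ax.
  rewrite derive1E; have [_ ->] := dF x x0.
  by rewrite addrK mulrA mulVf ?gt_eqF// mul1r.
Qed.

Lemma int_pow01 (p : R) : -1 < p ->
  (@lebesgue_measure R).-integrable `[0, 1%R] (fun t => (t `^ p)%:E).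
Proof.
move=> p1.
have p10 : 0 < p + 1 by rewrite -ltrBlDr sub0r.
have mf : measurable_fun (setT : set R) (fun t : R => ((t `^ p)%:E : \bar R)).
  by apply/measurable_EFinP; exact: measurable_powR.
apply/integrableP; split; first exact: measurable_funS mf.
under eq_integral do rewrite gee0_abs ?lee_fin ?powR_ge0//.
rewrite -integral_itv_obnd_cbnd; last exact: measurable_funS mf.
pose g (n : nat) := (fun t : R => (t `^ p)%:E) \_ `[(n.+2%:R)^-1, 1%R].
have g0 n t : (0 <= g n t)%E by rewrite /g patchE; case: ifP => // _; rewrite lee_fin powR_ge0.
have gnd t : nondecreasing_seq (g ^~ t).
  move=> m n mn; rewrite /g !patchE.
  case: ifPn => [|_]; last by case: ifP => // _; rewrite lee_fin powR_ge0.
  rewrite !inE /= !in_itv /= => /andP[mt t1].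
  rewrite mem_set //= in_itv /= t1 andbT; apply: le_trans mt; rewrite lef_pV2 ?posrE ?ltr0n// ler_nat ltnS ltnS.
  done.
have mg (n : nat) : measurable_fun (`]0%R, 1%R] : set R) (g n).
  apply/measurable_restrict => //.
  exact: measurable_funS mf.
rewrite (@eq_integral _ _ _ (@lebesgue_measure R) _ (fun t => limn (g ^~ t))); last first.
  move=> t; rewrite inE /= in_itv /= => /andP[t0 t1].
  apply/esym/cvg_lim => //; apply: cvg_near_cst.
  exists (Num.truncn t^-1) => // n /= Nn.
  rewrite /g patchE mem_set // /= in_itv /= t1 andbT.
  rewrite -[t]invrK lef_pV2 ?posrE ?ltr0n ?invr_gt0 //.
  apply/ltW/(lt_le_trans (truncnS_gt _)).
  by rewrite ler_nat ltnS (leq_trans Nn).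
rewrite monotone_convergence //.
apply: le_lt_trans (ltry ((p+1)^-1)).
apply: lime_le.
  apply: ereal_nondecreasing_is_cvgn => m n mn.
  by apply: ge0_le_integral => //; [exact: mg|exact: mg|move=> t _; exact: gnd].
apply: nearW => n.
rewrite -integral_mkcondr setIidr; last first.
  move=> t /=; rewrite !in_itv /= => /andP[+ ->]; rewrite andbT.
  by apply: lt_le_trans; rewrite invr_gt0 ltr0n.
rewrite FTC_pow //; last by rewrite invf_lt1 ?ltr0n // ltr1n.
  by rewrite lee_fin lerBlDr lerDl mulr_ge0 ?powR_ge0 // invr_ge0 ltW.
Qed.

Definition LR := measurableTypeR R.
Lemma mpowR (q : R) : measurable_fun (setT : set LR) (fun x : LR => @powR R x q).
Proof. exact: measurable_powR. Qed.
Lemma mfst_pow (q : R) : measurable_fun (setT : set (LR * LR)) (fun z : LR * LR => @powR R z.1 q).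
Proof. exact: measurableT_comp (mpowR q) measurable_fst. Qed.
Lemma msnd_pow (q : R) : measurable_fun (setT : set (LR * LR)) (fun z : LR * LR => @powR R z.2 q).
Proof. exact: measurableT_comp (mpowR q) measurable_snd. Qed.

Lemma int_prod (p q : R) : -1 < p -> -1 < q ->
  ((@lebesgue_measure R) \x (@lebesgue_measure R))%E.-integrable
    (`[0%R, 1%R] `*` `[0%R, 1%R]) (fun z : R * R => (z.1 `^ q * z.2 `^ p)%:E).
Proof.
move=> p1 q1.
have mD : measurable (`[0%R, 1%R] `*` `[0%R, 1%R] : set (LR * LR)).
  by apply: measurableX; exact: measurable_itv.
apply/integrable_mkcond => //.
apply/integrable12ltyP.
  apply: (measurable_restrictT _ mD).1.
  apply/measurable_EFinP; apply: measurable_funS (measurable_funM (mfst_pow q) (msnd_pow p)) => //.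
pose h1 := (fun x : R => (x `^ q)%:E) \_ `[0%R, 1%R].
pose h2 := (fun x : R => (x `^ p)%:E) \_ `[0%R, 1%R].
have h10 x : (0 <= h1 x)%E by rewrite /h1 patchE; case: ifP => // _; rewrite lee_fin powR_ge0.
have h20 x : (0 <= h2 x)%E by rewrite /h2 patchE; case: ifP => // _; rewrite lee_fin powR_ge0.
have E x y : (`|((fun z : R * R => (z.1 `^ q * z.2 `^ p)%:E) \_
            (`[0%R, 1%R] `*` `[0%R, 1%R])) (x, y)| = h1 x * h2 y)%E.
  rewrite /h1 /h2 !patchE in_setX /=.
  case: (x \in _); case: (y \in _) => /=; rewrite ?mule0 ?mul0e ?normr0 ?mulr0 ?mul0r //.
  by rewrite ger0_norm ?EFinM // mulr_ge0 ?powR_ge0.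
have mh1 : measurable_fun (setT : set LR) h1.
  apply: (measurable_restrictT _ _).1; first exact: measurable_itv.
  apply/measurable_EFinP; exact: measurable_funS (mpowR q).
have mh2 : measurable_fun (setT : set LR) h2.
  apply: (measurable_restrictT _ _).1; first exact: measurable_itv.
  apply/measurable_EFinP; exact: measurable_funS (mpowR p).
apply: (@le_lt_trans _ _ (\int[@lebesgue_measure R]_x (h1 x * \int[@lebesgue_measure R]_y h2 y))%E).
  rewrite le_eqVlt; apply/orP; left; apply/eqP.
  apply: eq_integral => x _.
  rewrite -ge0_integralZl //.
  by apply: eq_integral => y _; exact: E.
rewrite ge0_integralZr //; last by apply: integral_ge0.
have I1 : (\int[@lebesgue_measure R]_x h1 x)%E \is a fin_num.
  rewrite /h1 -integral_mkcond; apply: integrable_fin_num => //.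
  exact: int_pow01.
have I2 : (\int[@lebesgue_measure R]_x h2 x)%E \is a fin_num.
  rewrite /h2 -integral_mkcond; apply: integrable_fin_num => //.
  exact: int_pow01.
by rewrite -(fineK I1) -(fineK I2) -EFinM ltry.
Qed.
Lemma pow34_bound (c e : R) : 0 < e ->
  exists M : R, forall L, 0 <= L -> c * L `^ (3/4) <= e * L + M.
Proof.
move=> e0.
have [c0|c0] := leP c 0.
  exists 0; move=> L L0; rewrite addr0; apply: (@le_trans _ _ 0).
    by rewrite mulr_le0_ge0 ?powR_ge0.
  by rewrite mulr_ge0 // ltW.
set L0 := (c / e) ^+ 4.
have ce0 : 0 < c / e by rewrite divr_gt0.
have L00 : 0 < L0 by rewrite exprn_gt0.
exists (c * L0 `^ (3/4)); move=> L L0ge.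
have [LL0|L0L] := leP L L0.
  rewrite -[X in X <= _]add0r; apply: lerD; first by rewrite mulr_ge0 // ltW.
  rewrite ler_pM2l //; apply: ge0_ler_powR; [by rewrite divr_ge0|by rewrite nnegrE|by rewrite nnegrE ltW|exact: LL0].
suff : c * L `^ (3/4) <= e * L.
  by move=> h; apply: (le_trans h); rewrite lerDl mulr_ge0 ?powR_ge0 // ltW.
have Lp : 0 < L by apply: lt_trans L0L.
have LE : L = L `^ (1/4) * L `^ (3/4).
  rewrite -powRD; last by rewrite gt_eqF ?implybT.
  have -> : (1/4 + 3/4 : R) = 1 by lra.
  by rewrite powRr1 // ltW.
have h14 : c / e <= L `^ (1/4).
  have -> : c / e = L0 `^ (1/4).
    rewrite /L0 -powR_mulrn ?ltW // -powRrM.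
    have -> : (4%:R * (1/4) : R) = 1 by lra.
    by rewrite powRr1 // ltW.
  apply: ge0_ler_powR; first lra.
  - by rewrite nnegrE ltW.
  - by rewrite nnegrE ltW.
  - exact: ltW.
rewrite [X in _ <= e * X]LE mulrA; apply: ler_wpM2r; first exact: powR_ge0.
by rewrite -ler_pdivrMl // mulrC.
Qed.

Lemma key (C a : R) : -1 < a -> exists K p q : R, [/\ 0 <= K, -1 < p, -1 < q &
  forall x y : R, 0 <= x <= 1 -> 0 < y <= 1 ->
    (kC C a x y) ^+ 2 <= K * (x `^ q * y `^ p)].
Proof.
move=> ha.
have a2 : 0 < a + 2 by lra.
pose e := (a + 1) / (4 * (a + 2)).
have e0 : 0 < e by rewrite /e divr_gt0 //; lra.
have e3 : 3 * e < 1.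
  by rewrite /e mulrA ltr_pdivrMr; lra.
have e2 : 2 * e <= a + 1.
  rewrite /e mulrA ler_pdivrMr; last lra.
  nra.
have [M hM] := @pow34_bound (2 * C) e e0.
exists (C ^+ 2 * expR (2 * M)), (e - 1), (- (3 * e)); split.
- by apply: mulr_ge0; rewrite ?sqr_ge0 ?expR_ge0.
- lra.
- lra.
move=> x y /andP[x0 x1] /andP[y0 y1].
rewrite /kC.
have [yx|xy] := ltP y x; last first.
  rewrite mulr0 expr0n /=.
  by apply: mulr_ge0; apply: mulr_ge0; rewrite ?sqr_ge0 ?expR_ge0 ?powR_ge0.
have xp : 0 < x by apply: lt_trans yx.
set u := ln x; set v := ln y.
have vu : v < u by rewrite /u /v ltr_ln ?posrE.
have u0 : u <= 0 by apply: ln_le0.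
have v0 : v <= 0 by apply: ln_le0.
rewrite !lnV ?posrE // -/u -/v mulr1.
have -> : x `^ ((a + 1) / 2) = expR ((a + 1) / 2 * u) by rewrite /powR gt_eqF.
have -> : y `^ (a / 2) = expR (a / 2 * v) by rewrite /powR gt_eqF.
have -> : x `^ (- (3 * e)) = expR (- (3 * e) * u) by rewrite /powR gt_eqF.
have -> : y `^ (e - 1) = expR ((e - 1) * v) by rewrite /powR gt_eqF.
have hu := hM (- u) ltac:(lra).
have hv := hM (- v) ltac:(lra).
set T := C * (- u) `^ (3 / 4) + C * (- v) `^ (3 / 4).
have -> : C * expR T * expR (a / 2 * v) / expR ((a + 1) / 2 * u) =
          C * expR (T + a / 2 * v - (a + 1) / 2 * u).
  by rewrite expRB (expRD T) !mulrA.
rewrite exprMn -expRM_natl -expRD -[C ^+ 2 * expR (2 * M) * _]mulrA -expRD.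
apply: ler_wpM2l; first exact: sqr_ge0.
rewrite ler_expR.
have hd : 0 <= (a + 1 - 2 * e) * (u - v) by apply: mulr_ge0; lra.
rewrite /T; lra.
Qed.
Lemma lnV' (x : R) : ln (x^-1) = - ln x.
Proof.
have [x0|x0] := ltP 0 x; first by rewrite lnV ?posrE.
by rewrite !ln0 ?oppr0 // invr_le0.
Qed.

Lemma kC_split (C a x y : R) : kC C a x y =
  (C * expR (C * (- ln x) `^ (3/4)) * x `^ (- ((a+1)/2))) *
  (expR (C * (- ln y) `^ (3/4)) * y `^ (a/2)) * (if y < x then 1 else 0).
Proof.
rewrite /kC !lnV' expRD powRN.
ring.
Qed.

Lemma mA (C a : R) : measurable_fun (setT : set LR)
  (fun x : R => C * expR (C * (- ln x) `^ (3/4)) * x `^ (- ((a+1)/2))).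
Proof.
apply: measurable_funM; last exact: mpowR.
apply: measurable_funM; first exact: measurable_cst.
apply: (measurableT_comp (@measurable_expR R)).
apply: measurable_funM; first exact: measurable_cst.
apply: (measurableT_comp (mpowR _)).
apply: (measurableT_comp (@oppr_measurable R _)).
exact: measurable_ln.
Qed.

Lemma mB (C a : R) : measurable_fun (setT : set LR)
  (fun y : R => expR (C * (- ln y) `^ (3/4)) * y `^ (a/2)).
Proof.
apply: measurable_funM; last exact: mpowR.
apply: (measurableT_comp (@measurable_expR R)).
apply: measurable_funM; first exact: measurable_cst.
apply: (measurableT_comp (mpowR _)).
apply: (measurableT_comp (@oppr_measurable R _)).
exact: measurable_ln.
Qed.

Lemma mK (C a : R) : measurable_fun (setT : set (LR * LR))
  (fun z : R * R => ((kC C a z.1 z.2) ^+ 2)%:E).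
Proof.
apply/measurable_EFinP.
under eq_fun do rewrite kC_split.
apply: measurable_funX.
apply: measurable_funM; first apply: measurable_funM.
- exact: measurableT_comp (mA C a) measurable_fst.
- exact: measurableT_comp (mB C a) measurable_snd.
apply: measurable_fun_ifT.
- apply: measurable_fun_ltr; [exact: measurable_snd|exact: measurable_fst].
- exact: measurable_cst.
- exact: measurable_cst.
Qed.
End S.

Theorem proposition1 (R : realType) (C a : R) (ha : -1 < a) :
  hilbert_schmidt_kernel (kC C a).
Proof.
have [K [p [q [K0 p1 q1 hk]]]] := @key R C a ha.
rewrite /hilbert_schmidt_kernel.
have mI : measurable (`[0%R, 1%R] : set (LR R)) by exact: measurable_itv.
have mD : measurable (`[0%R, 1%R] `*` `[0%R, 1%R] : set (LR R * LR R)).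
  exact: measurableX.
pose N : set (LR R * LR R) := `[0%R, 1%R] `*` [set 0%R].
have mN : measurable N by apply: measurableX => //; exact: measurable_set1.
have N0 : ((@lebesgue_measure R) \x (@lebesgue_measure R))%E N = 0%E.
  rewrite product_measure1E //; apply/eqP; rewrite mule_eq0; apply/orP; right; apply/eqP; exact: lebesgue_measure_set1.
apply/(negligible_integrable mN mD _ N0).2.
  exact: measurable_funS (@mK R C a).
have mDN : measurable (`[0%R, 1%R] `*` `[0%R, 1%R] `\` N : set (LR R * LR R)).
  exact: measurableD.
apply: (@le_integrable _ _ _ _ _ mDN _ (fun z : R * R => (K%:E * (z.1 `^ q * z.2 `^ p)%:E)%E)).
- by apply: measurable_funS (@mK R C a) => // z [].
- move=> [x y] [[/= Dx Dy] Nxy].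
  move: Dx Dy; rewrite /= !in_itv /= => Dx Dy.
  have y0 : y != 0%R.
    by apply/eqP => y0; apply: Nxy; split => //=; rewrite in_itv.
  have yp : (0 < y)%R by rewrite lt_neqAle eq_sym y0; case/andP: Dy.
  rewrite lee_fin ger0_norm ?sqr_ge0 // ger0_norm; last first.
    by apply: mulr_ge0 => //; apply: mulr_ge0; exact: powR_ge0.
  apply: hk => //.
  by rewrite yp; case/andP: Dy.
- apply: (integrableS mD mDN) => //.
  by apply: integrableZl => //; exact: int_prod.
Qed.
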